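(* Let $z,b$ be non-singular complex $r\times r$ matrices. Then $$\bar z\,{}^tz=\bar b\,{}^tb,\qquad {}^tz\,\bar z=b^\ast b,\qquad b\,{}^tz=z\,{}^tb$$ hold if and only if $b=USV^\ast$ and $z=USW\,{}^tV$ for some positive definite real diagonal matrix $S$ and unitary matrices $U,V,W$ with ${}^tW=W$ and $WS=SW$.
   Context: ${}^tM$ denotes the transpose, $\bar M$ the entrywise complex conjugate, and $M^\ast={}^t\bar M$. *)

(* Defs.v *)
From HB Require Import structures.
From mathcomp Require Import all_boot all_order all_algebra.
Set Implicit Arguments. Unset Strict Implicit. Unset Printing Implicit Defensive.
Import Order.TTheory GRing.Theory Num.Theory.
Local Open Scope ring_scope.

Definition conjm {C : numClosedFieldType} {m n : nat} (M : 'M[C]_(m, n)) : 'M[C]_(m, n) :=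
  map_mx Num.conj M.

Definition adjm {C : numClosedFieldType} {m n : nat} (M : 'M[C]_(m, n)) : 'M[C]_(n, m) :=
  (conjm M)^T.

(* Main.v *)
Require Import Defs.
From HB Require Import structures.
From mathcomp Require Import all_boot all_order all_algebra.
Import Order.TTheory GRing.Theory Num.Theory.
Local Open Scope ring_scope.

Section S.
Context {C : numClosedFieldType} {n : nat}.
Implicit Types A B X Y U V W b z L M R N : 'M[C]_n.
Lemma unitaryE A : (A \is unitarymx) = (A *m adjm A == 1%:M).
Proof. by rewrite qualifE /adjm /conjm map_trmx. Qed.
Lemma cjM A B : conjm (A *m B) = conjm A *m conjm B.
Proof. exact: map_mxM. Qed.
Lemma cjT A : conjm A^T = (conjm A)^T.
Proof. by rewrite /conjm map_trmx. Qed.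
Lemma cjK A : conjm (conjm A) = A.
Proof. by apply/matrixP=> i j; rewrite !mxE conjCK. Qed.
Lemma adjM A B : adjm (A *m B) = adjm B *m adjm A.
Proof. by rewrite /adjm cjM trmx_mul. Qed.
Lemma adjK A : adjm (adjm A) = A.
Proof. by rewrite /adjm cjT cjK trmxK. Qed.
Lemma cancel1 {m} (M : 'M[C]_(m, n)) {X Y} : X *m Y = 1%:M -> M *m X *m Y = M.
Proof. by move=> h; rewrite -mulmxA h mulmx1. Qed.
Lemma canc {L1 L2 R1 R2 X Y : 'M[C]_n} : L1 \in unitmx -> L2 \in unitmx -> R1 \in unitmx -> R2 \in unitmx ->
  L1 *m L2 *m X *m R1 *m R2 = L1 *m L2 *m Y *m R1 *m R2 -> X = Y.
Proof.
move=> u1 u2 u3 u4 /(congr1 (mulmx^~ (invmx R2))); rewrite !mulmxK //.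
move=> /(congr1 (mulmx^~ (invmx R1))); rewrite !mulmxK //.
move=> /(congr1 (mulmx (invmx L1))); rewrite -!mulmxA !mulKmx //.
move=> /(congr1 (mulmx (invmx L2))); rewrite !mulKmx //.
Qed.
Lemma unit_props U : U \is unitarymx ->
  [/\ U *m adjm U = 1%:M, adjm U *m U = 1%:M, conjm U *m U^T = 1%:M & U^T *m conjm U = 1%:M].
Proof.
rewrite unitaryE => /eqP h; have h2 := mulmx1C h.
have cadj : conjm (adjm U) = U^T by rewrite /adjm cjT cjK.
split=> //.
  by rewrite -cadj -cjM h /conjm map_mx1.
by rewrite -cadj -cjM h2 /conjm map_mx1.
Qed.
Lemma cjT' A : conjm A^T = adjm A.
Proof. by rewrite cjT. Qed.
Lemma tadj A : (adjm A)^T = conjm A.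
Proof. by rewrite /adjm trmxK. Qed.
Lemma cadj A : conjm (adjm A) = A^T.
Proof. by rewrite /adjm cjT cjK. Qed.
Lemma cD (s : 'rV[C]_n) : (forall i, 0 < s 0 i) -> conjm (diag_mx s) = diag_mx s.
Proof.
move=> hs; apply/matrixP=> i j; rewrite !mxE; case: (i == j); rewrite ?mulr1n ?mulr0n.
  by rewrite geC0_conj // ltW.
by rewrite conjC0.
Qed.
Lemma adjD (s : 'rV[C]_n) : (forall i, 0 < s 0 i) -> adjm (diag_mx s) = diag_mx s.
Proof. by move=> hs; rewrite /adjm cD // tr_diag_mx. Qed.

Lemma backward (s : 'rV[C]_n) U V W b z :
  (forall i, 0 < s 0 i) -> U \is unitarymx -> V \is unitarymx -> W \is unitarymx ->
      W^T = W -> W *m diag_mx s = diag_mx s *m W ->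
      b = U *m diag_mx s *m adjm V ->
      z = U *m diag_mx s *m W *m V^T ->
  (conjm z *m z^T = conjm b *m b^T /\
    z^T *m conjm z = adjm b *m b /\
    b *m z^T = z *m b^T).
Proof.
move=> hs /unit_props [U1 U2 U3 U4] /unit_props [V1 V2 V3 V4] hW WT WD -> ->.
have [W1 W2 W3 W4] := unit_props W hW.
rewrite -cjT' WT in W1; rewrite WT in W3.
set D := diag_mx s.
have tD : D^T = D by rewrite tr_diag_mx.
split; last split.
- rewrite !cjM !trmx_mul !trmxK ?cadj ?cjT' ?tadj ?tD ?WT /D cD // !mulmxA.
  by rewrite !(cancel1 _ V2) !(cancel1 _ W3) !(cancel1 _ V4).
- rewrite !cjM !adjM !trmx_mul !trmxK ?cadj ?cjT' ?tadj ?adjK ?tD ?WT /D ?cD ?adjD // !mulmxA.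
  rewrite !(cancel1 _ U4) !(cancel1 _ U2).
  rewrite -[V *m W *m _]mulmxA WD mulmxA -[V *m _ *m W *m _]mulmxA WD !mulmxA.
  by rewrite !(cancel1 _ W1).
- rewrite !trmx_mul !trmxK ?cadj ?cjT' ?tadj ?tD ?WT /D  !mulmxA.
  by rewrite !(cancel1 _ V2) !(cancel1 _ V4).
Qed.
Lemma adjE m p (M : 'M[C]_(m, p)) : map_mx Num.conj (M^T) = adjm M.
Proof. by rewrite /adjm /conjm map_trmx. Qed.

Lemma svd b : b \in unitmx -> exists (s : 'rV[C]_n) U V,
  (forall i, 0 < s 0 i) /\ U \is unitarymx /\ V \is unitarymx /\
  b = U *m diag_mx s *m adjm V.
Proof.
move=> ub.
pose A := b *m adjm b.
have An : A \is normalmx.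
  by rewrite qualifE adjE /A adjM adjK.
have := orthomx_spectralP An.
set P := spectralmx A; set d := spectral_diag A => Aeq.
have Pu : P \is unitarymx := spectral_unitarymx A.
have [P1 P2 P3 P4] := unit_props P Pu.
have Pinv : invmx P = adjm P by rewrite invmx_unitary // adjE.
rewrite Pinv in Aeq.
have dE : P *m A *m adjm P = diag_mx d.
  by rewrite Aeq !mulmxA P1 mul1mx (cancel1 _ P1).
have dpos : forall i, 0 < d 0 i.
  move=> i.
  have -> : d 0 i = diag_mx d i i by rewrite mxE eqxx mulr1n.
  rewrite -dE.
  pose M := P *m b.
  have uM : M \in unitmx by rewrite unitmx_mul ub unitarymx_unit.
  have -> : P *m A *m adjm P = M *m adjm M by rewrite /M /A adjM !mulmxA.
  have -> : (M *m adjm M) i i = dotmx (row i M) (row i M).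
    rewrite dotmxE adjE !mxE; apply: eq_bigr => k _; rewrite !mxE //.
  apply: dotmx_is_dotmx; apply/negP => /eqP h.
  have := congr1 (fun v => (v *m invmx M) 0 i) h.
  by rewrite /= -row_mul mulmxV // mul0mx !mxE eqxx /= => /eqP; rewrite oner_eq0.
pose s := \row_i sqrtC (d 0 i).
have spos : forall i, 0 < s 0 i by move=> i; rewrite mxE sqrtC_gt0.
pose D := diag_mx s.
have DD : D *m D = diag_mx d.
  by rewrite mulmx_diag; congr diag_mx; apply/rowP => i; rewrite !mxE -expr2 sqrtCK.
pose Di := diag_mx (\row_i (s 0 i)^-1).
have DDi : D *m Di = 1%:M.
  rewrite mulmx_diag -diag_const_mx; congr diag_mx; apply/rowP => i.
  by rewrite !mxE divff // gt_eqF // sqrtC_gt0.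
have DiD : Di *m D = 1%:M := mulmx1C DDi.
have adjDi : adjm Di = Di by apply: adjD => i; rewrite mxE invr_gt0.
pose X := Di *m P *m b.
have XX : X *m adjm X = 1%:M.
  have : Di *m (D *m D) *m Di = 1%:M by rewrite !mulmxA DiD mul1mx DDi.
  by rewrite DD -dE /A !mulmxA /X !adjM adjDi !mulmxA.
exists s, (adjm P), (adjm X); split=> //; split; last split.
- by rewrite unitaryE adjK P2.
- by rewrite unitaryE adjK (mulmx1C XX).
- by rewrite adjK /X !mulmxA (cancel1 _ DDi) P2 mul1mx.
Qed.
Lemma forward b z : z \in unitmx -> b \in unitmx ->
  conjm z *m z^T = conjm b *m b^T ->
  z^T *m conjm z = adjm b *m b ->
  b *m z^T = z *m b^T ->
  exists (s : 'rV[C]_n) U V W,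
      (forall i, 0 < s 0 i) /\
      U \is unitarymx /\ V \is unitarymx /\ W \is unitarymx /\
      W^T = W /\ W *m diag_mx s = diag_mx s *m W /\
      b = U *m diag_mx s *m adjm V /\
      z = U *m diag_mx s *m W *m V^T.
Proof.
move=> uz ub H1 H2 H3.
have [s [U [V [spos [Uu [Vu bE]]]]]] := svd b ub.
have [U1 U2 U3 U4] := unit_props U Uu.
have [V1 V2 V3 V4] := unit_props V Vu.
pose D := diag_mx s.
pose Di := diag_mx (\row_i (s 0 i)^-1).
have DDi : D *m Di = 1%:M.
  rewrite mulmx_diag -diag_const_mx; congr diag_mx; apply/rowP => i.
  by rewrite !mxE divff // gt_eqF.
have uD : D \in unitmx by case: (mulmx1_unit DDi).
have uU : U \in unitmx by exact: unitarymx_unit.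
have uUT : U^T \in unitmx by rewrite unitmx_tr.
have uV : V \in unitmx by exact: unitarymx_unit.
have ucU : conjm U \in unitmx by apply: unitarymx_unit; rewrite conjC_unitary.
have uVs : adjm V \in unitmx by apply: unitarymx_unit; rewrite unitaryE adjK V2.
pose W := Di *m adjm U *m z *m conjm V.
have zE : z = U *m D *m W *m V^T.
  by rewrite /W !mulmxA (cancel1 _ DDi) U1 mul1mx (cancel1 _ V3).
clearbody W.
have tD : D^T = D by rewrite tr_diag_mx.
have cD' : conjm D = D by rewrite cD.
have aD : adjm D = D by rewrite adjD.
rewrite zE bE in H1 H2 H3.
move: H3; rewrite !trmx_mul !trmxK ?tadj ?tD !mulmxA (cancel1 _ V2) (cancel1 _ V4).
move=> /(canc uU uD uD uUT) WT.
move: H1; rewrite !cjM !trmx_mul !trmxK ?cadj ?cjT' ?tadj ?tD ?cD' ?WT !mulmxA.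
rewrite (cancel1 _ V2) (cancel1 _ V4) => H1.
have W3 : conjm W *m W = 1%:M.
  apply: (canc ucU uD uD uUT); rewrite mulmx1 !mulmxA; exact: H1.
have W1 : W *m conjm W = 1%:M := mulmx1C W3.
have Wu : W \is unitarymx by rewrite unitaryE -cjT' WT W1.
move: H2; rewrite !cjM !adjM !trmx_mul !trmxK ?adjK ?cadj ?cjT' ?tadj ?tD ?cD' ?aD ?WT !mulmxA.
rewrite (cancel1 _ U4) (cancel1 _ U2) => H2.
have e : W *m D *m D *m conjm W = D *m D.
  apply: (canc (L2:=1%:M) (R1:=1%:M) uV (unitmx1 _ _) (unitmx1 _ _) uVs); rewrite !mulmx1 !mulmxA; exact: H2.
have WDD : W *m (D *m D) = D *m D *m W.
  by have := congr1 (mulmx^~ W) e; rewrite /= (cancel1 _ W3) mulmxA.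
exists s, U, V, W. split=> //. split=> //. split=> //. split=> //. split=> //. split; last by split.
  rewrite /D mulmx_diag -/D in WDD.
  apply/matrixP => i j; move/matrixP: WDD => /(_ i j).
  rewrite !mul_mx_diag !mul_diag_mx !mxE.
  have [->|Wn] := eqVneq (W i j) 0; first by rewrite !mul0r !mulr0.
  move=> h; suff -> : s 0 j = s 0 i by rewrite mulrC.
  apply/eqP; rewrite -(@eqrXn2 _ 2) // ?ltW //.
  by rewrite !expr2; apply/eqP; apply: (mulfI Wn); rewrite h mulrC.
Qed.
End S.

Theorem lemma9 (C : numClosedFieldType) (r : nat) (z b : 'M[C]_r) :
  z \in unitmx -> b \in unitmx ->
  ((conjm z *m z^T = conjm b *m b^T /\
    z^T *m conjm z = adjm b *m b /\
    b *m z^T = z *m b^T)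
   <->
   (exists (s : 'rV[C]_r) (U V W : 'M[C]_r),
      (forall i, 0 < s 0 i) /\
      U \is unitarymx /\ V \is unitarymx /\ W \is unitarymx /\
      W^T = W /\ W *m diag_mx s = diag_mx s *m W /\
      b = U *m diag_mx s *m adjm V /\
      z = U *m diag_mx s *m W *m V^T)).
Proof.
move=> uz ub; split.
  by case=> H1 [H2 H3]; exact: forward.
case=> s [U [V [W [hs [Uu [Vu [Wu [WT [WD [bE zE]]]]]]]]]].
exact: (backward hs Uu Vu Wu WT WD bE zE) || exact: (backward _ _ _ _ _ _ hs Uu Vu Wu WT WD bE zE).
Qed.
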